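(* Let $\mathcal{A}\subset\mathbb{R}^n$ be a nonempty compact set, $\Xi\subseteq\mathbb{R}^n$, $V:\mathbb{R}^n\to\mathbb{R}_+$ and $\Psi:\mathbb{R}^n\rightrightarrows\mathbb{R}^n$, and assume one of the following two settings holds: (i) $\Xi$ is nonempty, closed and convex, $\mathcal{A}$ is convex, and $V(y)=\tfrac12\|y-\mathbf{P}_{\mathcal{A}}(y)\|^2$; (ii) $\Xi=\mathbb{R}^n$ and $V$ is continuously differentiable with locally Lipschitz gradient, positive definite and radially unbounded with respect to $\mathcal{A}$. Assume $\Psi$ is SPSP with respect to $V$ on $\Xi$, and that there exists $\beta>0$ such that for all $y\in\Xi$ and all $s\in\Psi(y)$, $$\|s\|^2\le \beta\,\nabla V(y)^T s .$$ Then $\mathcal{A}$ is SPAS for the iterative method $y^+=\mathbf{P}_\Xi[y-\alpha s]$, $s\in\Psi(y)$, with parameter $\alpha>0$.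
   Context: $\|\cdot\|$ is Euclidean; $\mathbf{P}_S$ is the orthogonal projection onto a nonempty closed convex set $S$. For compact $S$ and $r>0$: $\bar B_r(S)=\{x:\|x-\mathbf{P}_S(x)\|\le r\}$, $B_r(S)=\{x:\|x-\mathbf{P}_S(x)\|<r\}$ (distance to $S$). A function $V$ is positive definite w.r.t. a closed set $S$ if $V=0$ on $S$ and $V>0$ off $S$; it is radially unbounded w.r.t. $S$ (on a set $\Xi$) if for every $B\in\mathbb{R}$ there is $r>0$ with $V(x)>B$ for all $x$ (in $\Xi$) outside $\bar B_r(S)$. SPSP: Let $V:\mathbb{R}^n\to\mathbb{R}_+$ be differentiable, positive definite and radially unbounded w.r.t. compact $\mathcal{A}$, and let $\Xi$ strictly contain $\mathcal{A}$ (every point of $\mathcal{A}$ has an open ball around it contained in $\Xi$). $\Psi$ is semiglobally, practically, strictly pseudogradient (SPSP) w.r.t. $V$ on $\Xi$ if there exist $\epsilon\ge0$, $b\ge0$ such that $\nabla V(y)^Ts\ge -b$ for all $y\in\Xi\cap\bar B_\epsilon(\mathcal{A})$, $s\in\Psi(y)$, and for every $\sigma>\epsilon$ there is a continuous $\phi_{\sigma,\epsilon}:\mathbb{R}^n\to\mathbb{R}$, positive on $\Xi\cap(\bar B_\sigma(\mathcal{A})\setminus B_\epsilon(\mathcal{A}))$ and radially unbounded w.r.t. $\mathcal{A}$ on $\Xi$, with $\nabla V(y)^Ts\ge\phi_{\sigma,\epsilon}(y)$ for all $y\in\Xi\cap(\bar B_\sigma(\mathcal{A})\setminus B_\epsilon(\mathcal{A}))$,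 $s\in\Psi(y)$. SPAS (for the iteration with parameter $\alpha$; statements below concern every sequence $(y(t))_{t\in\mathbb{N}}$ with $y(0)\in\Xi$, $y(t+1)=\mathbf{P}_\Xi[y(t)-\alpha s(t)]$, $s(t)\in\Psi(y(t))$): $\mathcal{A}$ is practically stable if for some $\check\rho_s>0$ and every $\rho_s>\check\rho_s$ there exist $\delta>0$ and a nonempty set $P_s\subset(0,\infty)$ such that whenever $\alpha\in P_s$ and $y(0)\in\bar B_\delta(\mathcal{A})\cap\Xi$, $y(t)\in\bar B_{\rho_s}(\mathcal{A})\cap\Xi$ for all $t$. A compact $S$ is uniformly attractive on compact $\Omega$ if for every $\varepsilon>0$ with $\bar B_\varepsilon(S)\cap\Xi\subset\Omega\cap\Xi$ there is $T\in\mathbb{N}$ such that $y(t)\in\bar B_\varepsilon(S)$ whenever $y(0)\in\Omega$ and $t\ge T$. $\mathcal{A}$ is semiglobally practically attractive if for some $\check\rho_a>0$ and all $\sigma>\rho_a>\check\rho_a$ there is a nonempty $P_a\subset(0,\infty)$ such that whenever $\alpha\in P_a$, $\bar B_{\rho_a}(\mathcal{A})$ is uniformly attractive on $\bar B_\sigma(\mathcal{A})$. $\mathcal{A}$ is SPAS (semiglobally practically asymptotically stable) if it is practically stable and semiglobally practically attractive. *)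

(* Defs.v *)
(* Vectors of R^n are row vectors 'rV[R]_n
   over an abstract R : realType; the Euclidean structure is defined explicitly. *)
From HB Require Import structures.
From mathcomp Require Import all_boot all_order all_algebra.
From mathcomp Require Import all_classical all_reals all_analysis.
Set Implicit Arguments. Unset Strict Implicit. Unset Printing Implicit Defensive.
Import Order.TTheory GRing.Theory Num.Theory.
Import numFieldNormedType.Exports.
Local Open Scope classical_set_scope.
Local Open Scope ring_scope.

Section Defs.
Variables (R : realType) (n : nat).
Local Notation vec := 'rV[R]_n.

Definition edot (x y : vec) : R := \sum_(i < n) x ord0 i * y ord0 i.
Definition enorm (x : vec) : R := Num.sqrt (edot x x).

Definition dist_to (S : set vec) (x : vec) : R :=
  inf [set enorm (x - a) | a in S].

Definition nbhd_cl (S : set vec) (r : R) : set vec := [set x | dist_to S x <= r].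
Definition nbhd_op (S : set vec) (r : R) : set vec := [set x | dist_to S x < r].

Definition is_proj (S : set vec) (x p : vec) : Prop :=
  S p /\ forall q, S q -> enorm (x - p) <= enorm (x - q).

Definition is_convex (S : set vec) : Prop :=
  forall x y (t : R), S x -> S y -> 0 <= t <= 1 -> S (t *: x + (1 - t) *: y).

Definition has_gradient (V : vec -> R) (g : vec -> vec) : Prop :=
  forall y (e : R), 0 < e -> exists2 d : R, 0 < d &
    forall h, enorm h < d -> `|V (y + h) - V y - edot (g y) h| <= e * enorm h.

Definition locally_lipschitz (g : vec -> vec) : Prop :=
  forall y, exists2 r : R, 0 < r & exists L : R,
    forall z1 z2, enorm (z1 - y) < r -> enorm (z2 - y) < r ->
      enorm (g z1 - g z2) <= L * enorm (z1 - z2).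

Definition pos_def_wrt (V : vec -> R) (S : set vec) : Prop :=
  (forall x, S x -> V x = 0) /\ (forall x, ~ S x -> 0 < V x).

Definition rad_unb_on (V : vec -> R) (S Xi : set vec) : Prop :=
  forall B : R, exists2 r : R, 0 < r &
    forall x, Xi x -> ~ nbhd_cl S r x -> B < V x.

Definition strictly_contains (Xi A : set vec) : Prop :=
  forall a, A a -> exists2 r : R, 0 < r & forall x, enorm (x - a) < r -> Xi x.

Definition SPSP (Psi : vec -> set vec) (g : vec -> vec) (A Xi : set vec) : Prop :=
  strictly_contains Xi A /\
  exists eps b : R, 0 <= eps /\ 0 <= b /\
    (forall y s, Xi y -> nbhd_cl A eps y -> Psi y s -> - b <= edot (g y) s) /\
    (forall sigma : R, eps < sigma ->
       exists phi : vec -> R, continuous phi /\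
         (forall y, Xi y -> nbhd_cl A sigma y -> ~ nbhd_op A eps y -> 0 < phi y) /\
         rad_unb_on phi A Xi /\
         (forall y s, Xi y -> nbhd_cl A sigma y -> ~ nbhd_op A eps y -> Psi y s ->
            phi y <= edot (g y) s)).

Definition trajectory (Xi : set vec) (Psi : vec -> set vec) (alpha : R)
    (y : nat -> vec) : Prop :=
  Xi (y 0%N) /\ exists s : nat -> vec, forall t,
    Psi (y t) (s t) /\ is_proj Xi (y t - alpha *: s t) (y t.+1).

Definition practically_stable (Xi : set vec) (Psi : vec -> set vec)
    (A : set vec) : Prop :=
  exists2 rho0 : R, 0 < rho0 & forall rho : R, rho0 < rho ->
    exists2 delta : R, 0 < delta & exists P : set R,
      P !=set0 /\ (forall a, P a -> 0 < a) /\
      forall alpha y, P alpha -> trajectory Xi Psi alpha y ->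
        nbhd_cl A delta (y 0%N) -> forall t, nbhd_cl A rho (y t) /\ Xi (y t).

Definition uniformly_attractive (Xi : set vec) (Psi : vec -> set vec)
    (alpha : R) (S Omega : set vec) : Prop :=
  forall e : R, 0 < e -> nbhd_cl S e `&` Xi `<=` Omega `&` Xi ->
    exists T : nat, forall y, trajectory Xi Psi alpha y -> Omega (y 0%N) ->
      forall t, (T <= t)%N -> nbhd_cl S e (y t).

Definition semiglobally_practically_attractive (Xi : set vec)
    (Psi : vec -> set vec) (A : set vec) : Prop :=
  exists2 rho0 : R, 0 < rho0 & forall sigma rho : R, rho0 < rho -> rho < sigma ->
    exists P : set R, P !=set0 /\ (forall a, P a -> 0 < a) /\
      forall alpha, P alpha ->
        uniformly_attractive Xi Psi alpha (nbhd_cl A rho) (nbhd_cl A sigma).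

Definition SPAS (Xi : set vec) (Psi : vec -> set vec) (A : set vec) : Prop :=
  practically_stable Xi Psi A /\ semiglobally_practically_attractive Xi Psi A.

End Defs.

(* Main.v *)
Require Import Defs.
From HB Require Import structures.
From mathcomp Require Import all_boot all_order all_algebra.
From mathcomp Require Import all_classical all_reals all_analysis.
From mathcomp Require Import ring lra.
Import Order.TTheory GRing.Theory Num.Theory.
Import numFieldNormedType.Exports.
Local Open Scope classical_set_scope.
Local Open Scope ring_scope.
Set Implicit Arguments. Unset Strict Implicit. Unset Printing Implicit Defensive.

Section Vec.
Variables (R : realType) (n : nat).
Local Notation vec := 'rV[R]_n.
Implicit Types x y z : vec.

Lemma edotC x y : edot x y = edot y x.
Proof. by rewrite /edot; apply: eq_bigr => i _; rewrite mulrC. Qed.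
Lemma edotDl x y z : edot (x + y) z = edot x z + edot y z.
Proof. by rewrite /edot -big_split; apply: eq_bigr => i _; rewrite mxE mulrDl. Qed.
Lemma edotZl a x y : edot (a *: x) y = a * edot x y.
Proof. by rewrite /edot mulr_sumr; apply: eq_bigr => i _; rewrite mxE mulrA. Qed.
Lemma edotNl x y : edot (- x) y = - edot x y.
Proof. by rewrite -scaleN1r edotZl mulN1r. Qed.
Lemma edotBl x y z : edot (x - y) z = edot x z - edot y z.
Proof. by rewrite edotDl edotNl. Qed.
Lemma edotDr x y z : edot z (x + y) = edot z x + edot z y.
Proof. by rewrite edotC edotDl !(edotC z). Qed.
Lemma edotZr a x y : edot y (a *: x) = a * edot y x.
Proof. by rewrite edotC edotZl edotC. Qed.
Lemma edotBr x y z : edot z (x - y) = edot z x - edot z y.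
Proof. by rewrite edotC edotBl !(edotC z). Qed.
Lemma edot0l x : edot 0 x = 0.
Proof. by rewrite -(scale0r x) edotZl mul0r. Qed.
Lemma edotxx_ge0 x : 0 <= edot x x.
Proof. by rewrite /edot; apply: sumr_ge0 => i _; rewrite -expr2 sqr_ge0. Qed.
Lemma edotxx_eq0 x : edot x x = 0 -> x = 0.
Proof.
move=> /eqP; rewrite /edot psumr_eq0; last by move=> i _; rewrite -expr2 sqr_ge0.
move=> /allP H; apply/rowP => i; rewrite mxE.
have := H i (mem_index_enum i); rewrite /= -expr2 sqrf_eq0.
by move/eqP.
Qed.

Lemma enorm_ge0 x : 0 <= enorm x.
Proof. exact: sqrtr_ge0. Qed.
Lemma enorm_sq x : enorm x ^+ 2 = edot x x.
Proof. by rewrite sqr_sqrtr // edotxx_ge0. Qed.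
Lemma enorm_eq0 x : enorm x = 0 -> x = 0.
Proof. by move=> h; apply: edotxx_eq0; rewrite -enorm_sq h expr0n. Qed.
Lemma enorm0 : enorm (0 : vec) = 0.
Proof. by rewrite /enorm edot0l sqrtr0. Qed.
Lemma enormZ a x : enorm (a *: x) = `|a| * enorm x.
Proof.
rewrite /enorm edotZl edotZr mulrA sqrtrM; last by rewrite -expr2 sqr_ge0.
by rewrite -expr2 sqrtr_sqr.
Qed.
Lemma enormN x : enorm (- x) = enorm x.
Proof. by rewrite -scaleN1r enormZ normrN normr1 mul1r. Qed.
Lemma enormB x y : enorm (x - y) = enorm (y - x).
Proof. by rewrite -enormN opprB. Qed.

Lemma edot_sqB t x y :
  edot (t *: x - y) (t *: x - y) = t ^+ 2 * edot x x - 2 * t * edot x y + edot y y.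
Proof.
rewrite edotBl !edotBr !edotZl !edotZr (edotC y x).
by rewrite expr2; ring.
Qed.

Lemma edot_sqD x y :
  edot (x + y) (x + y) = edot x x + 2 * edot x y + edot y y.
Proof. rewrite !edotDl !edotDr (edotC y x); ring. Qed.

Lemma CS x y : edot x y <= enorm x * enorm y.
Proof.
have hb2 : edot x y ^+ 2 <= edot x x * edot y y.
  have [a0|apos] := eqVneq (edot x x) 0.
    by rewrite (edotxx_eq0 a0) !edot0l expr0n /= mul0r.
  have ap : 0 < edot x x by rewrite lt_def apos edotxx_ge0.
  have := edotxx_ge0 ((edot x y / edot x x) *: x - y).
  rewrite edot_sqB => h.
  have e : (edot x y / edot x x) ^+ 2 * edot x x - 2 * (edot x y / edot x x) * edot x y
     = - (edot x y ^+2 / edot x x).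
    by field; rewrite apos.
  rewrite e in h.
  have : edot x y ^+ 2 / edot x x <= edot y y by lra.
  by rewrite ler_pdivrMr // mulrC.
have := enorm_ge0 x; have := enorm_ge0 y.
rewrite -!enorm_sq in hb2 *.
move: (edot x y) hb2 => b. move: (enorm x) (enorm y) => u v h hv hu.
have w := mulr_ge0 hu hv.
have [//|lt] := leP b (u * v).
have : 0 < (b - u * v) * (b + u * v) by apply: mulr_gt0; lra.
move: h; rewrite !expr2; nra.
Qed.

Lemma enormD x y : enorm (x + y) <= enorm x + enorm y.
Proof.
have h : enorm (x + y) ^+ 2 <= (enorm x + enorm y) ^+ 2.
  rewrite enorm_sq edot_sqD -!enorm_sq; have := CS x y; lra.
have := enorm_ge0 (x + y); have := enorm_ge0 x; have := enorm_ge0 y.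
move: h; move: (enorm (x+y)) (enorm x) (enorm y) => a b c; nra.
Qed.

Lemma enormBtri x y z : enorm (x - z) <= enorm (x - y) + enorm (y - z).
Proof. by have := enormD (x - y) (y - z); rewrite addrA subrK. Qed.

End Vec.

Section Topo.
Variables (R : realType) (n : nat).
Local Notation vec := 'rV[R]_n.
Implicit Types x y z : vec.

Lemma coord_le_enorm x (i : 'I_n) : `|x ord0 i| <= enorm x.
Proof.
rewrite -sqrtr_sqr; apply: ler_wsqrtr.
rewrite /edot (bigD1 i) //= expr2 lerDl; apply: sumr_ge0 => j _.
by rewrite -expr2 sqr_ge0.
Qed.

Lemma mxnorm_le_enorm x : `|x| <= enorm x.
Proof.
rewrite [leLHS]/Num.norm /= mx_normrE; apply: bigmax_le => //; first exact: enorm_ge0.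
by move=> [i j] _ /=; rewrite (ord1 i); exact: coord_le_enorm.
Qed.

Lemma coord_le_mxnorm x (i : 'I_n) : `|x ord0 i| <= `|x|.
Proof.
rewrite [leRHS]/Num.norm /= mx_normrE.
exact: (le_bigmax _ (fun ij : 'I_1 * 'I_n => `|x ij.1 ij.2|) (ord0, i)).
Qed.

Lemma enorm_le_mxnorm x : enorm x <= n.+1%:R * `|x|.
Proof.
have h : edot x x <= (n.+1%:R * `|x|) ^+ 2.
  apply: (@le_trans _ _ (\sum_(i < n) `|x| ^+ 2)).
    rewrite /edot; apply: ler_sum => i _.
    rewrite -expr2 -real_normK ?num_real //.
    rewrite ler_pXn2r ?nnegrE //; exact: coord_le_mxnorm.
  rewrite sumr_const card_ord exprMn -[_ *+ n]mulr_natl.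
  apply: ler_wpM2r; first exact: sqr_ge0.
  by rewrite -natrX ler_nat expnS (leq_trans (leqnSn n)) // leq_pmulr // expn_gt0.
have := enorm_ge0 x; rewrite -enorm_sq in h.
have : 0 <= n.+1%:R * `|x| by rewrite mulr_ge0.
move: h; move: (enorm x) (n.+1%:R * `|x|) => a b; nra.
Qed.

Lemma near_enorm y e : 0 < e -> \forall z \near y, enorm (z - y) < e.
Proof.
move=> e0.
have e1 : 0 < e / n.+1%:R by rewrite divr_gt0.
have := near_ball y (e / n.+1%:R) e1.
apply: filterS => z; rewrite -ball_normE /ball_ /= => h.
apply: (le_lt_trans (enorm_le_mxnorm _)).
rewrite distrC in h.
by rewrite mulrC -ltr_pdivlMr.
Qed.

Lemma cont_enorm (f : vec -> R) y :
  (forall e, 0 < e -> exists2 d, 0 < d & forall z, enorm (z - y) < d -> `|f z - f y| < e) ->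
  {for y, continuous f}.
Proof.
move=> h; apply/(@cvgrPdist_lt _ _ _ (nbhs y) _ f (f y)) => e e0.
have [d d0 H] := h e e0.
near=> z; rewrite distrC; apply: H; near: z; exact: near_enorm.
Unshelve. all: by end_near.
Qed.

Lemma bounded_enorm (S : set vec) B : (forall x, S x -> enorm x <= B) -> bounded_set S.
Proof.
move=> h; change (\forall M \near +oo, globally S [set x | `|x| <= M]).
have := nbhs_pinfty_ge (num_real B); apply: filterS => M BM x Sx /=.
apply: (le_trans (mxnorm_le_enorm _)); exact: (le_trans (h x Sx)).
Qed.

Lemma closed_sublevel (f : vec -> R) c : continuous f -> closed [set x | f x <= c].
Proof.
move=> cf; apply: (@preimage_closed _ _ f [set x | x <= c]).
  by move=> x _; exact: cf.
exact: closed_le.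
Qed.

Lemma closed_superlevel (f : vec -> R) c : continuous f -> closed [set x | c <= f x].
Proof.
move=> cf; apply: (@preimage_closed _ _ f [set x | c <= x]).
  by move=> x _; exact: cf.
exact: closed_ge.
Qed.

Lemma cont_ub (K : set vec) (f : vec -> R) : compact K -> continuous f ->
  exists M, 0 <= M /\ forall x, K x -> f x <= M.
Proof.
move=> cK cf.
have [[c Kc]|K0] := pselect (K !=set0); last first.
  by exists 0; split => // x Kx; exfalso; apply: K0; exists x.
have [m mK hm] := @EVT_max_rV R n f K (ex_intro _ c Kc) cK (continuous_subspaceT cf).
exists (Num.max 0 (f m)); split; first by rewrite le_max lexx.
move=> x Kx; rewrite le_max; apply/orP; right; apply: hm; by rewrite inE.
Qed.

Lemma cont_lbpos (K : set vec) (f : vec -> R) : compact K -> continuous f ->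
  (forall x, K x -> 0 < f x) -> exists2 m, 0 < m & forall x, K x -> m <= f x.
Proof.
move=> cK cf pos.
have [[c Kc]|K0] := pselect (K !=set0); last first.
  by exists 1 => // x Kx; exfalso; apply: K0; exists x.
have [m mK hm] := @EVT_min_rV R n f K (ex_intro _ c Kc) cK (continuous_subspaceT cf).
exists (f m); first by apply: pos; rewrite -inE.
by move=> x Kx; apply: hm; rewrite inE.
Qed.


End Topo.

Section Dist.
Variables (R : realType) (n : nat).
Local Notation vec := 'rV[R]_n.
Implicit Types x y z : vec.

Lemma edotNr x y : edot x (- y) = - edot x y.
Proof. by rewrite edotC edotNl edotC. Qed.

Lemma CSabs x y : `|edot x y| <= enorm x * enorm y.
Proof.
rewrite ler_norml CS andbT lerNl -edotNr -(enormN y); exact: CS.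
Qed.

Lemma enorm_lip x y : `|enorm x - enorm y| <= enorm (x - y).
Proof.
have h1 := enormBtri x y 0; have h2 := enormBtri y x 0.
rewrite !subr0 in h1 h2; rewrite (enormB y x) in h2.
rewrite ler_norml; apply/andP; split; lra.
Qed.

Lemma enorm_cont : continuous (@enorm R n).
Proof.
move=> y; apply: cont_enorm => e e0; exists e => // z hz.
exact: le_lt_trans (enorm_lip z y) hz.
Qed.

Lemma enormB_cont (a : vec) : continuous (fun x => enorm (x - a)).
Proof.
move=> y; apply: cont_enorm => e e0; exists e => // z hz.
apply: le_lt_trans (enorm_lip _ _) _; by rewrite opprB addrA subrK.
Qed.

Variable (A : set vec).
Hypothesis hA : A !=set0.

Lemma dist_hlb x : has_lbound [set enorm (x - a) | a in A].
Proof. by exists 0 => _ [b _ <-]; exact: enorm_ge0. Qed.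

Lemma dist_le x a : A a -> dist_to A x <= enorm (x - a).
Proof. by move=> Aa; apply: (ge_inf (dist_hlb x)); exists a. Qed.

Lemma dist_ge x m : (forall a, A a -> m <= enorm (x - a)) -> m <= dist_to A x.
Proof.
move=> h; apply: lb_le_inf.
  by have [a Aa] := hA; exists (enorm (x - a)); exists a.
by move=> _ [a Aa <-]; exact: h.
Qed.

Lemma dist_ge0 x : 0 <= dist_to A x.
Proof. by apply: dist_ge => a _; exact: enorm_ge0. Qed.

Lemma dist_lip x y : dist_to A x <= dist_to A y + enorm (x - y).
Proof.
rewrite -lerBlDr; apply: dist_ge => a Aa; rewrite lerBlDr.
apply: le_trans (dist_le x Aa) _; rewrite [leRHS]addrC; exact: enormBtri.
Qed.

Lemma dist_cont : continuous (dist_to A).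
Proof.
move=> y; apply: cont_enorm => e e0; exists e => // z hz.
have h1 := dist_lip z y; have h2 := dist_lip y z; rewrite enormB in h2.
rewrite ltr_norml; apply/andP; split; lra.
Qed.

Lemma nbhd_cl_closed r : closed (nbhd_cl A r).
Proof. exact: closed_sublevel dist_cont. Qed.

Lemma near_point x r : dist_to A x <= r -> exists2 a, A a & enorm (x - a) <= r + 1.
Proof.
move=> hx; apply: contrapT => H.
have : r + 1 <= dist_to A x.
  apply: dist_ge => a Aa; rewrite leNgt; apply/negP => lt; apply: H.
  by exists a => //; exact: ltW.
lra.
Qed.

Lemma nbhd_cl_bounded (hc : compact A) r :
  exists B, forall x, nbhd_cl A r x -> enorm x <= B.
Proof.
have [Ba [_ hBa]] := cont_ub hc enorm_cont.
exists (r + 1 + Ba) => x hx; have [a Aa ha] := near_point hx.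
have := enormD (x - a) a; rewrite subrK => h.
have := hBa a Aa; lra.
Qed.

End Dist.

Lemma compact_cb (R : realType) n (S : set 'rV[R]_n) :
  closed S -> (exists B, forall x, S x -> enorm x <= B) -> compact S.
Proof.
move=> cS [B hB]; apply: bounded_closed_compact => //; exact: bounded_enorm hB.
Qed.

Lemma grad_cont (R : realType) n (V : 'rV[R]_n -> R) g :
  has_gradient V g -> continuous V.
Proof.
move=> hg y; apply: cont_enorm => e e0.
have [d d0 hd] := hg y 1 ltr01.
set G := enorm (g y).
have G0 : 0 <= G by exact: enorm_ge0.
have e2 : 0 < e / (G + 2) by rewrite divr_gt0 //; lra.
exists (Num.min d (e / (G + 2))); first by rewrite lt_min d0 e2.
move=> z; rewrite lt_min => /andP[hzd hze].
have := hd (z - y) hzd; have -> : y + (z - y) = z by rewrite addrC subrK.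
rewrite mul1r => h1.
have h2 := CSabs (g y) (z - y).
have h0 := enorm_ge0 (z - y).
have : (G + 1) * enorm (z - y) < e.
  have : (G + 2) * enorm (z - y) < e by rewrite mulrC -ltr_pdivlMr //; lra.
  nra.
move: h1 h2; rewrite -/G.
move: (V z - V y) (edot (g y) (z - y)) (enorm (z - y)) => a b c.
move=> h1 h2 h3; have h4 := ler_normD (a - b) b.
rewrite subrK in h4; nra.
Qed.

Section Descent1.
Variables (R : realType) (n : nat).
Local Notation vec := 'rV[R]_n.
Implicit Types x y z : vec.

Lemma proj_exists (A : set vec) : A !=set0 -> compact A ->
  forall z, exists2 p, A p & dist_to A z = enorm (z - p).
Proof.
move=> hA cA z.
have [p pA hp] := @EVT_min_rV R n (fun x => enorm (x - z)) A hA cA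
  (continuous_subspaceT (@enormB_cont R n z)).
rewrite inE in pA; exists p => //; apply/le_anti/andP; split.
  exact: dist_le.
apply: dist_ge => // a Aa; rewrite enormB (enormB z); apply: hp; by rewrite inE.
Qed.

Lemma supergrad (V : vec -> R) g z w C : has_gradient V g ->
  (forall h, V (z + h) <= V z + edot w h + C * enorm h ^+ 2) -> g z = w.
Proof.
move=> hg hup; apply/eqP; rewrite -subr_eq0; apply/eqP.
set u := g z - w; apply: contrapT => u0.
set N := enorm u.
have N0 : 0 < N.
  rewrite lt_def enorm_ge0 andbT; apply/eqP => h; apply: u0; exact: enorm_eq0.
set e := N / 4.
have e0 : 0 < e by rewrite divr_gt0.
have [d d0 hd] := hg z e e0.
set C' : R := `|C| + 1.
have C'0 : 0 < C' by rewrite ltr_wpDl.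
have CC' : C <= C' by have := ler_norm C; rewrite /C'; lra.
set t := Num.min (d / (2 * N)) (1 / (4 * C')).
have t0 : 0 < t.
  by rewrite lt_min !divr_gt0 ?mulr_gt0.
have ht1 : t <= d / (2 * N) by rewrite ge_min lexx.
have ht2 : t <= 1 / (4 * C') by rewrite ge_min lexx orbT.
have tN1 : t * N <= d / 2.
  have -> : d / 2 = d / (2 * N) * N.
    by field; exact: lt0r_neq0.
  by rewrite ler_pM2r.
have tN2 : C' * t <= 1 / 4.
  have -> : 1 / 4 = C' * (1 / (4 * C')) :> R.
    by field; rewrite ?lt0r_neq0.
  by rewrite ler_pM2l.
have hn : enorm (t *: u) = t * N by rewrite enormZ gtr0_norm.
have h1 := hd (t *: u); rewrite hn in h1.
have /h1 {}h1 : t * N < d by lra.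
have h2 := hup (t *: u); rewrite hn in h2.
rewrite !edotZr in h1 h2.
have h3 : edot (g z) u - edot w u = N ^+ 2 by rewrite -edotBl enorm_sq.
move: h1 h2 h3.
set a := V (z + t *: u); set vz := V z.
move: (edot (g z) u) (edot w u) => gu wu h1 h2 h3.
rewrite ler_norml in h1; case/andP: h1 => h1 _.
set P := t * N ^+ 2.
have P0 : 0 < P by rewrite mulr_gt0 // exprn_gt0.
have hA : t * gu - t * wu = P by rewrite -mulrBr h3.
have hB : e * (t * N) = P / 4 by rewrite /e /P expr2; field.
have hC : C * (t * N) ^+ 2 <= P / 4.
  apply: (@le_trans _ _ (C' * (t * N) ^+ 2)); first by rewrite ler_wpM2r ?sqr_ge0.
  have -> : C' * (t * N) ^+ 2 = (C' * t) * P by rewrite /P !expr2; ring.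
  have -> : P / 4 = 1 / 4 * P by field.
  by rewrite ler_pM2r.
move: h1 h2 hA hB hC P0; clear; move: a vz P => a vz P; lra.
Qed.

End Descent1.

Definition descent_prop (R : realType) n (Xi : set 'rV[R]_n) (Psi : 'rV[R]_n -> set 'rV[R]_n)
  (V : 'rV[R]_n -> R) (g : 'rV[R]_n -> 'rV[R]_n) :=
  forall M : R, exists2 a0 : R, 0 < a0 & forall a y s y', 0 < a -> a <= a0 ->
    Xi y -> V y <= M -> Psi y s -> is_proj Xi (y - a *: s) y' ->
    V y' <= V y - a / 2 * edot (g y) s.

Section CaseI.
Variables (R : realType) (n : nat).
Local Notation vec := 'rV[R]_n.
Implicit Types x y z : vec.

Lemma sq_le (a b : R) : 0 <= a -> a <= b -> a ^+ 2 <= b ^+ 2.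
Proof. by move=> a0 ab; rewrite ler_pXn2r ?nnegrE // (le_trans a0). Qed.

Lemma quad_i (A : set vec) (V : vec -> R) g : A !=set0 -> compact A ->
  (forall y, V y = 2^-1 * dist_to A y ^+ 2) -> has_gradient V g ->
  forall z h, V (z + h) <= V z + edot (g z) h + 2^-1 * enorm h ^+ 2.
Proof.
move=> hA cA hV hg z.
have [p Ap hp] := proj_exists hA cA z.
have key : forall h, V (z + h) <= V z + edot (z - p) h + 2^-1 * enorm h ^+ 2.
  move=> h; rewrite !hV hp.
  have d1 : dist_to A (z + h) <= enorm (z + h - p) by apply: dist_le.
  have d0 := dist_ge0 hA (z + h).
  have e1 : enorm (z + h - p) ^+ 2 = enorm (z - p) ^+ 2 + 2 * edot (z - p) h + enorm h ^+ 2.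
    rewrite !enorm_sq; have -> : z + h - p = (z - p) + h by rewrite addrAC.
    exact: edot_sqD.
  have := sq_le d0 d1; rewrite e1; lra.
by rewrite (supergrad hg key).
Qed.

Lemma num_aux (k D : R) : 0 <= D ->
  (forall t : R, 0 <= t <= 1 -> 2 * t * k <= t ^+ 2 * D) -> k <= 0.
Proof.
move=> D0 key; rewrite leNgt; apply/negP => kpos.
have kD : 0 < k + D by lra.
have t01 : 0 <= k / (k + D) <= 1.
  apply/andP; split; first by rewrite divr_ge0 // ltW.
  by rewrite ler_pdivrMr // mul1r; lra.
have tpos : 0 < k / (k + D) by rewrite divr_gt0.
have hle : k / (k + D) * D <= k.
  rewrite mulrAC ler_pdivrMr //; nra.
have := key _ t01.
move: tpos hle; move: (k / (k + D)) => t tpos hle.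
have -> : 2 * t * k = t * (2 * k) by ring.
have -> : t ^+ 2 * D = t * (t * D) by ring.
rewrite ler_pM2l // => h.
lra.
Qed.

Lemma proj_nonexp (Xi : set vec) z y' q : is_convex Xi -> is_proj Xi z y' -> Xi q ->
  enorm (y' - q) <= enorm (z - q).
Proof.
move=> cX [Xy' hmin] Xq.
set u := z - y'; set v := q - y'.
have key : forall t : R, 0 <= t <= 1 -> 2 * t * edot v u <= t ^+ 2 * edot v v.
  move=> t ht.
  have := hmin _ (cX q y' t Xq Xy' ht).
  have -> : z - (t *: q + (1 - t) *: y') = - (t *: v - u).
    by apply/rowP => i; rewrite /u /v !mxE; ring.
  rewrite enormN => h.
  have := sq_le (enorm_ge0 _) h; rewrite !enorm_sq edot_sqB; lra.
have k0 : edot v u <= 0 by apply: (num_aux (edotxx_ge0 v)).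
have -> : z - q = u - v by apply/rowP => i; rewrite /u /v !mxE; ring.
have -> : y' - q = - v by apply/rowP => i; rewrite /v !mxE; ring.
rewrite enormN; clearbody u v.
have h : enorm v ^+ 2 <= enorm (u - v) ^+ 2.
  rewrite !enorm_sq edotBl !edotBr; have := edotC u v; have := edotxx_ge0 u; lra.
have := enorm_ge0 v; have := enorm_ge0 (u - v); move: h.
move: (enorm v) (enorm (u - v)) => a b; nra.
Qed.

End CaseI.

Lemma desc_i (R : realType) n (A Xi : set 'rV[R]_n) Psi V g beta :
  A !=set0 -> compact A -> is_convex Xi -> A `<=` Xi ->
  (forall y, V y = 2^-1 * dist_to A y ^+ 2) -> has_gradient V g -> 0 < beta ->
  (forall y s, Xi y -> Psi y s -> enorm s ^+ 2 <= beta * edot (g y) s) ->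
  descent_prop Xi Psi V g.
Proof.
move=> hA cA cX AX hV hg b0 hb M; exists (1 / beta); first by rewrite divr_gt0.
move=> a y s y' a0 ab Xy _ Ps pr.
have hV' : V y' <= V (y - a *: s).
  have [p Ap hp] := proj_exists hA cA (y - a *: s).
  rewrite !hV hp.
  have d1 : dist_to A y' <= enorm (y' - p) by apply: dist_le.
  have d2 := proj_nonexp cX pr (AX _ Ap).
  have := sq_le (dist_ge0 hA y') (le_trans d1 d2).
  by move=> h; rewrite ler_pM2l // invr_gt0.
have hq := quad_i hA cA hV hg y (- (a *: s)).
rewrite edotNr edotZr enormN enormZ gtr0_norm // in hq.
have hs := hb y s Xy Ps.
have gs0 : 0 <= edot (g y) s.
  rewrite -(pmulr_rge0 _ b0); exact: le_trans (sqr_ge0 _) hs.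
have abe : a * beta <= 1 by rewrite -ler_pdivlMr // .
have : a ^+ 2 * enorm s ^+ 2 <= a * edot (g y) s.
  apply: (@le_trans _ _ (a ^+ 2 * (beta * edot (g y) s))).
    by rewrite ler_wpM2l // sqr_ge0.
  rewrite expr2 -mulrA ler_pM2l // mulrA.
  have := mulr_ge0 (ltW a0) gs0; nra.
move: hV' hq; rewrite exprMn.
move: (V y') (V (y - a *: s)) (V y) (edot (g y) s) (a ^+ 2 * enorm s ^+ 2) => v1 v2 v3 gs q.
rewrite -/(y - a *: s) => h1 h2 h3.
lra.
Qed.

Section CaseII.
Variables (R : realType) (n : nat).
Local Notation vec := 'rV[R]_n.
Implicit Types x y z : vec.

Lemma ulip (g : vec -> vec) (K : set vec) : locally_lipschitz g -> compact K ->
  exists2 r : R, 0 < r & exists L : R, 0 <= L /\ forall y, K y -> forall z1 z2,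
    enorm (z1 - y) < r -> enorm (z2 - y) < r -> enorm (g z1 - g z2) <= L * enorm (z1 - z2).
Proof.
move=> hl cK.
pose P := fun (i : R) (x : vec) => forall z1 z2, enorm (z1 - x) < i^-1 ->
  enorm (z2 - x) < i^-1 -> enorm (g z1 - g z2) <= i * enorm (z1 - z2).
have H : \forall i \near +oo, K `<=` P i.
  apply: ((compact_near_coveringP K).1 cK R _ P _) => x Kx.
  have [rx rx0 [Lx hx]] := hl x.
  near=> x' i.
  move=> z1 z2 h1 h2.
  have ipos : 0 < i by near: i; apply: nbhs_pinfty_gt; exact: num_real.
  have iL : Lx <= i by near: i; apply: nbhs_pinfty_ge; exact: num_real.
  have ir : 2 / rx < i by near: i; apply: nbhs_pinfty_gt; exact: num_real.
  have hx' : enorm (x' - x) < rx / 2.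
    by near: x'; apply: near_enorm; rewrite divr_gt0.
  have iv : i^-1 < rx / 2.
    move: ir; rewrite ltr_pdivrMr // => ir.
    rewrite -[i^-1]mul1r ltr_pdivrMr //; nra.
  have t1 := enormBtri z1 x' x; have t2 := enormBtri z2 x' x.
  have := hx z1 z2 _ _.
  move=> /(_ _ _) h; apply: le_trans (h _ _) _.
  - lra.
  - lra.
  - by rewrite ler_wpM2r // enorm_ge0.
have := filter_ex (filterI H (nbhs_pinfty_gt (num_real (0 : R)))).
move=> [i [hi ipos]].
exists i^-1; first by rewrite invr_gt0.
exists i; split; first exact: ltW.
move=> y Ky z1 z2; exact: hi.
Unshelve. all: by end_near.
Qed.

End CaseII.

Section Deriv.
Variables (R : realType) (n : nat).
Local Notation vec := 'rV[R]_n.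
Implicit Types x y z : vec.

Lemma deriv_line (V : vec -> R) g y w c : has_gradient V g ->
  is_derive c (1 : R) (fun t => V (y + t *: w)) (edot (g (y + c *: w)) w).
Proof.
move=> hg.
set p := y + c *: w; set l := edot (g p) w.
have H : (fun h : R => h^-1 *: (((fun t => V (y + t *: w)) \o shift c) (h *: (1:R))
            - V (y + c *: w))) @ 0^' --> l.
  apply/cvgrPdist_lt => e e0.
  set N := enorm w.
  have N0 : 0 <= N by exact: enorm_ge0.
  have e1 : 0 < e / (2 * (N + 1)) by rewrite divr_gt0 // mulr_gt0 //; lra.
  have [d d0 hd] := hg p _ e1.
  have d1 : 0 < d / (N + 1) by rewrite divr_gt0 //; lra.
  near=> h.
  have hn0 : h != 0 by near: h; exact: nbhs_dnbhs_neq.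
  have hs : `|h| < d / (N + 1) by near: h; exact: dnbhs0_lt.
  rewrite /comp /shift.
  have -> : h *: (1:R) = h by rewrite /GRing.scale /= mulr1.
  have -> : y + (h + c) *: w = p + h *: w.
    by apply/rowP => i; rewrite /p !mxE; ring.
  have hh : enorm (h *: w) < d.
    have N1 : 0 < N + 1 by lra.
    rewrite enormZ; move: hs; rewrite ltr_pdivlMr // => hs.
    rewrite -/N; have := normr_ge0 h; nra.
  have := hd _ hh; rewrite edotZr -/l enormZ -/N.
  rewrite -/p.
  move: (V (p + h *: w)) (V p) => v1 v2 hv.
  have -> : h^-1 *: (v1 - v2) = h^-1 * (v1 - v2) by [].
  have -> : l - h^-1 * (v1 - v2) = - h^-1 * (v1 - v2 - h * l).
    by field.
  rewrite normrM normrN normrV ?unitfE //.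
  have hpos : 0 < `|h| by rewrite normr_gt0.
  rewrite -(ltr_pM2l hpos) mulrA mulfV ?gt_eqF // mul1r.
  apply: le_lt_trans hv _.
  have : e / (2 * (N + 1)) * (`|h| * N) = `|h| * e * (N / (2 * (N + 1))).
    by field; lra.
  move=> ->; rewrite -[ltRHS]mulr1 ltr_pM2l ?mulr_gt0 //.
  rewrite ltr_pdivrMr ?mulr_gt0 //; lra.
apply: DeriveDef; first by apply/cvg_ex; exists l.
exact: cvg_lim H.
Unshelve. all: by end_near.
Qed.

Lemma line_mvt (V : vec -> R) g y (w : vec) (a : R) : has_gradient V g -> 0 < a ->
  exists2 c, 0 < c < a & V (y + a *: w) - V y = edot (g (y + c *: w)) w * a.
Proof.
move=> hg a0.
have hd := fun c => deriv_line y w c hg.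
have cf : {within `[0, a], continuous (fun t => V (y + t *: w))}.
  apply: derivable_within_continuous => t _; exact: ex_derive.
have [c hc hm] := @MVT R (fun t => V (y + t *: w)) (fun t => edot (g (y + t *: w)) w) (0:R) a a0 (fun t _ => hd t) cf.
exists c; first by move: hc; rewrite in_itv.
by move: hm; rewrite scale0r addr0 subr0.
Qed.

End Deriv.

Lemma desc_ii (R : realType) n (A : set 'rV[R]_n) Psi V g beta :
  A !=set0 -> compact A -> has_gradient V g -> continuous g -> locally_lipschitz g ->
  rad_unb_on V A setT -> 0 < beta ->
  (forall y s, setT y -> Psi y s -> enorm s ^+ 2 <= beta * edot (g y) s) ->
  descent_prop setT Psi V g.
Proof.
move=> hA cA hg cg hl hr b0 hb M.
set K := [set y | V y <= M].
have cK : compact K.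
  apply: compact_cb; first exact: closed_sublevel (grad_cont hg).
  have [r r0 hr'] := hr M.
  have [B hB] := nbhd_cl_bounded hA cA r.
  exists B => x Kx; apply: hB; apply: contrapT => hn.
  have := hr' x I hn; rewrite /K /= in Kx; lra.
have cgn : continuous (fun y => enorm (g y)).
  by move=> x; apply: continuous_comp; [exact: cg | exact: enorm_cont].
have [Gb [Gb0 hG]] := cont_ub cK cgn.
have [r r0 [L [L0 hL]]] := ulip hl cK.
have bG1 : 0 < beta * Gb + 1 by have := mulr_ge0 (ltW b0) Gb0; lra.
have bL1 : 0 < 2 * beta * (L + 1) by rewrite !mulr_gt0 //; lra.
exists (Num.min (r / (beta * Gb + 1)) (1 / (2 * beta * (L + 1)))).
  by rewrite lt_min !divr_gt0.
move=> a y s y' apos; rewrite le_min => /andP[ha1 ha2] _ Ky Ps [_ pr].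
have -> : y' = y - a *: s.
  have := pr (y - a *: s) I; rewrite subrr enorm0 => h.
  apply/esym/subr0_eq/enorm_eq0/le_anti; rewrite h enorm_ge0 //.
have hs := hb y s I Ps.
have G1 : enorm (g y) <= Gb := hG y Ky.
have es0 := enorm_ge0 s.
have gs0 : 0 <= edot (g y) s.
  rewrite -(pmulr_rge0 _ b0); exact: le_trans (sqr_ge0 _) hs.
have sB : enorm s <= beta * Gb.
  have c1 := CS (g y) s.
  have : enorm s ^+ 2 <= beta * Gb * enorm s.
    apply: le_trans hs _; rewrite -mulrA ler_pM2l //.
    apply: le_trans c1 _; exact: ler_wpM2r.
  rewrite expr2 => h; have bg := mulr_ge0 (ltW b0) Gb0.
  move: h bg es0; move: (enorm s) (beta * Gb) => e B; nra.
have [c /andP[c0 ca] hm] := line_mvt y (- s) hg apos.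
rewrite scalerN in hm.
set z2 := y + c *: - s.
have ez : enorm (y - z2) = c * enorm s.
  have -> : y - z2 = c *: s by apply/rowP => i; rewrite /z2 !mxE; ring.
  by rewrite enormZ gtr0_norm.
have hz2 : enorm (z2 - y) < r.
  rewrite enormB ez.
  have : a * (beta * Gb + 1) <= r by rewrite -ler_pdivlMr.
  have : c * enorm s <= a * (beta * Gb) by apply: ler_pM; lra.
  nra.
have hy0 : enorm (y - y) < r by rewrite subrr enorm0.
have lip := hL y Ky y z2 hy0 hz2.
rewrite ez in lip.
have e1 : edot (g z2) s = edot (g y) s - edot (g y - g z2) s by rewrite edotBl; ring.
have c2 := CS (g y - g z2) s.
rewrite edotNr e1 in hm.
have aL : a * beta * L <= 1 / 2.
  have : a * (2 * beta * (L + 1)) <= 1 by rewrite -ler_pdivlMr.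
  have := mulr_ge0 (mulr_ge0 (ltW apos) (ltW b0)) L0; nra.
have k1 : edot (g y - g z2) s <= L * (c * enorm s) * enorm s.
  apply: le_trans c2 _; exact: ler_wpM2r.
have k2 : L * (c * enorm s) * enorm s <= L * a * (beta * edot (g y) s).
  rewrite -mulrA -mulrA ler_wpM2l //.
  have p1 : 0 <= (a - c) * (enorm s * enorm s) by rewrite mulr_ge0 ?mulr_ge0 //; lra.
  have p2 : 0 <= a * (beta * edot (g y) s - enorm s * enorm s).
    by rewrite mulr_ge0 //; [lra | rewrite -expr2; lra].
  move: p1 p2; move: (enorm s) (edot (g y) s) => e q p1 p2; nra.
have k3 : L * a * (beta * edot (g y) s) <= edot (g y) s / 2.
  have -> : L * a * (beta * edot (g y) s) = (a * beta * L) * edot (g y) s by ring.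
  have -> : edot (g y) s / 2 = 1 / 2 * edot (g y) s by ring.
  exact: ler_wpM2r.
move: hm k1 k2 k3 gs0 apos.
move: (V (y - a *: s)) (V y) (edot (g y) s) (edot (g y - g z2) s) => v1 v2 gs q.
move: (L * (c * enorm s) * enorm s) (L * a * (beta * gs)) => m1 m2.
nra.
Qed.

Section Main.
Variables (R : realType) (n : nat).
Local Notation vec := 'rV[R]_n.

Lemma main_assembly (A Xi : set vec) (V : vec -> R) g (Psi : vec -> set vec) :
  A !=set0 -> compact A -> (forall y, 0 <= V y) -> continuous V -> closed Xi ->
  (forall B, exists2 r : R, 0 < r & forall x, Xi x -> ~ nbhd_cl A r x -> B < V x) ->
  descent_prop Xi Psi V g -> SPSP Psi g A Xi ->
  (forall y s, Xi y -> Psi y s -> 0 <= edot (g y) s) ->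
  SPAS Xi Psi A.
Proof.
move=> hA cA V0 cV cX hr hd [_ [eps [b [eps0 [_ [_ hphi]]]]]] hgs.
have bnd : forall (S : set vec) r, S `<=` nbhd_cl A r -> closed S -> compact S.
  move=> S r Sr cS; apply: compact_cb => //.
  have [B hB] := nbhd_cl_bounded hA cA r.
  by exists B => x /Sr; exact: hB.
have cK1 : compact (nbhd_cl A (eps + 1) `&` Xi).
  apply: (bnd _ (eps + 1)); first by move=> x [].
  by apply: closedI => //; exact: nbhd_cl_closed.
have [M1 [M10 hM1]] := cont_ub cK1 cV.
have [r1 r10 hr1] := hr M1.
have inr1 : forall x, Xi x -> V x <= M1 -> nbhd_cl A r1 x.
  move=> x Xx Vx; apply: contrapT => hn; have := hr1 x Xx hn; lra.
have trajX : forall a (y : nat -> vec), trajectory Xi Psi a y -> forall t, Xi (y t).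
  move=> a y [X0 [s hs]] [|t] //; by have [_ [? _]] := hs t.
split.
- exists r1 => // rho hrho.
  exists (eps + 1); first lra.
  have [a1 a1pos ha1] := hd M1.
  exists [set a | 0 < a <= a1]; split; first by exists a1; rewrite /= a1pos lexx.
  split; first by move=> a /andP[].
  move=> al y /andP[al0 ala] tr hy0.
  have Xt := trajX _ _ tr.
  case: tr => _ [s hs].
  have inv : forall t, V (y t) <= M1.
    elim=> [|t IH]; first by apply: hM1; split => //; exact: Xt.
    have [Ps pr] := hs t.
    have := ha1 al (y t) (s t) (y t.+1) al0 ala (Xt t) IH Ps pr.
    have := hgs _ _ (Xt t) Ps.
    have := mulr_ge0 (divr_ge0 (ltW al0) (ler0n _ 2)) (hgs _ _ (Xt t) Ps).
    lra.
  move=> t; split; last exact: Xt.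
  have := inr1 _ (Xt t) (inv t); rewrite /nbhd_cl /= => h; lra.
- exists r1 => // sigma rho hrho hsig.
  have cK2 : compact (nbhd_cl A sigma `&` Xi).
    apply: (bnd _ sigma); first by move=> x [].
    by apply: closedI => //; exact: nbhd_cl_closed.
  have [M2' [M20 hM2']] := cont_ub cK2 cV.
  set M2 := M1 + M2'.
  have [r2 r20 hr2] := hr M2.
  have inr2 : forall x, Xi x -> V x <= M2 -> nbhd_cl A r2 x.
    move=> x Xx Vx; apply: contrapT => hn; have := hr2 x Xx hn; lra.
  have [phi [cphi [phipos [_ phile]]]] := hphi (r2 + eps + 1) ltac:(lra).
  set K := Xi `&` [set y | V y <= M2] `&` [set y | eps + 1 <= dist_to A y].
  have inK : forall y, K y -> [/\ Xi y, nbhd_cl A (r2 + eps + 1) y & ~ nbhd_op A eps y].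
    move=> y [[Xy Vy] dy]; split => //.
      have := inr2 y Xy Vy; rewrite /nbhd_cl /=; lra.
    rewrite /nbhd_op /= => h; move: dy; rewrite /=; lra.
  have cK : compact K.
    apply: (bnd _ r2).
      by move=> y [[Xy Vy] _]; exact: inr2.
    apply: closedI; last exact: closed_superlevel (dist_cont hA).
    by apply: closedI => //; exact: closed_sublevel.
  have [m m0 hm] : exists2 m, 0 < m & forall x, K x -> m <= phi x.
    apply: cont_lbpos => // y /inK [Xy h1 h2]; exact: phipos.
  have [a2 a2pos ha2] := hd M2.
  exists [set a | 0 < a <= a2]; split; first by exists a2; rewrite /= a2pos lexx.
  split; first by move=> a /andP[].
  move=> al /andP[al0 ala] e e0 _.
  have am0 : 0 < al * m / 2 by rewrite !divr_gt0 ?mulr_gt0.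
  exists (Num.truncn (M2 / (al * m / 2))).+1.
  move=> y tr Om0.
  have Xt := trajX _ _ tr.
  case: tr => _ [s hs].
  have step : forall t, V (y t) <= M2 ->
      V (y t.+1) <= V (y t) - al / 2 * edot (g (y t)) (s t).
    move=> t Vt; have [Ps pr] := hs t.
    exact: ha2 al (y t) (s t) (y t.+1) al0 ala (Xt t) Vt Ps pr.
  have claim : forall t, V (y t) <= M1 \/ V (y t) <= M2 - t%:R * (al * m / 2).
    elim=> [|t IH].
      right; rewrite mul0r subr0.
      have := hM2' (y 0%N) (conj Om0 (Xt 0%N)); rewrite /M2; lra.
    have [Ps _] := hs t.
    have gs0 := hgs _ _ (Xt t) Ps.
    have pg := mulr_ge0 (divr_ge0 (ltW al0) (ler0n _ 2)) gs0.
    have tpos : 0 <= t%:R * (al * m / 2) by rewrite mulr_ge0 // ltW.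
    have [VM1|VM1] := leP (V (y t)) M1.
      left; have := step t ltac:(rewrite /M2; lra); lra.
    case: IH => IH; first lra.
    right.
    have Vt : V (y t) <= M2 by lra.
    have Ky : K (y t).
      split; first by split => //; exact: Xt.
      rewrite /= leNgt; apply/negP => hlt.
      have := hM1 (y t) (conj (ltW hlt : dist_to A (y t) <= eps + 1) (Xt t)); lra.
    have [Xy h1 h2] := inK _ Ky.
    have := le_trans (hm _ Ky) (phile _ _ Xy h1 h2 Ps).
    have := step t Vt.
    rewrite -[t.+1%:R]natr1 mulrDl mul1r.
    move=> h3 h4.
    have : al / 2 * m <= al / 2 * edot (g (y t)) (s t).
      by rewrite ler_pM2l // divr_gt0.
    have -> : al / 2 * m = al * m / 2 by rewrite mulrAC.
    lra.
  move=> t Tt.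
  have VM : V (y t) <= M1.
    case: (claim t) => // h; exfalso.
    have h1 := truncnS_gt (M2 / (al * m / 2)).
    have h2 : ((Num.truncn (M2 / (al * m / 2))).+1%:R : R) <= t%:R by rewrite ler_nat.
    have h3 : M2 < t%:R * (al * m / 2).
      by rewrite -ltr_pdivrMr //; exact: lt_le_trans h1 h2.
    have := V0 (y t); lra.
  have := inr1 _ (Xt t) VM; rewrite /nbhd_cl /= => h.
  have hS : nbhd_cl A rho (y t) by rewrite /nbhd_cl /=; lra.
  apply: le_trans (dist_le _ hS) _.
  by rewrite subrr enorm0 ltW.
Qed.

End Main.

Theorem theorem1 (R : realType) (n : nat) (A Xi : set 'rV[R]_n)
  (V : 'rV[R]_n -> R) (g : 'rV[R]_n -> 'rV[R]_n)
  (Psi : 'rV[R]_n -> set 'rV[R]_n) :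
  A !=set0 -> compact A ->
  (forall y, 0 <= V y) ->
  has_gradient V g ->
  ( (Xi !=set0 /\ closed Xi /\ is_convex Xi /\ is_convex A /\
       (forall y, V y = 2^-1 * dist_to A y ^+ 2))
    \/
    (Xi = setT /\ continuous g /\ locally_lipschitz g /\
       pos_def_wrt V A /\ rad_unb_on V A setT) ) ->
  SPSP Psi g A Xi ->
  (exists2 beta : R, 0 < beta &
     forall y s, Xi y -> Psi y s -> enorm s ^+ 2 <= beta * edot (g y) s) ->
  SPAS Xi Psi A.
Proof.
move=> hA cA V0 hg hcase hspsp [beta b0 hb].
have hgs : forall y s, Xi y -> Psi y s -> 0 <= edot (g y) s.
  move=> y s Xy Ps; rewrite -(pmulr_rge0 _ b0); exact: le_trans (sqr_ge0 _) (hb y s Xy Ps).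
have AX : A `<=` Xi.
  move=> a Aa; have [r r0 hr] := hspsp.1 a Aa; apply: hr; by rewrite subrr enorm0.
have cV := grad_cont hg.
case: hcase => [[_ [cX [cvX [_ hV]]]] | [hX [cg [hl [_ hr]]]]].
- apply: (main_assembly hA cA V0 cV cX _ _ hspsp hgs).
  + move=> B; exists (`|B| + 1); first by rewrite ltr_wpDl.
    move=> x _ hn; rewrite hV.
    have : `|B| + 1 < dist_to A x by rewrite ltNge; apply/negP.
    have := ler_norm B; move: (dist_to A x) => d h1 h2; nra.
  + exact: desc_i hA cA cvX AX hV hg b0 hb.
- rewrite hX in hspsp hgs hb *.
  apply: (main_assembly hA cA V0 cV closedT _ _ hspsp hgs).
  + move=> B; have [r r0 h] := hr B; by exists r.
  + exact: desc_ii hA cA hg cg hl hr b0 hb.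
Qed.
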